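(* Let $\rho,\sigma$ be positive semidefinite operators on $\mathcal{H}$ and $p\ge 0$ with $\rho\le p\sigma$. Then for every $x\in i\mathfrak{k}^*$, $I_\rho(x)\ge I_\sigma(x)-\ln p$. In particular, if $\mathrm{supp}\,\rho\subseteq\mathrm{supp}\,\sigma$ then $\mathrm{dom}\,I_\rho\subseteq\mathrm{dom}\,I_\sigma$.
   Context: $K$ is a compact connected Lie group with Lie algebra $\mathfrak{k}$, $G=K_{\mathbb{C}}$, $\mathfrak{g}=\mathbb{C}\otimes_{\mathbb{R}}\mathfrak{k}$, $i\mathfrak{k}^*$ the real space of complex-linear functionals on $\mathfrak{g}$ real on $i\mathfrak{k}$, with coadjoint $K$-action. $\pi:K\to U(\mathcal{H})$ is a unitary representation on a finite dimensional Hilbert space extended holomorphically to $G$. Fix a Borel subgroup $B\le G$; $T=B\cap K$, $\mathfrak{a}=i\,\mathrm{Lie}(T)$, $A=\exp\mathfrak{a}$, $N=[B,B]$; Iwasawa decomposition $g=kan$ with $\alpha(g)\in\mathfrak{a}$, $\exp\alpha(g)=a$. $i\mathfrak{t}^*_+$ is the closed dominant Weyl chamber; each $x=h\cdot x_0$ with $h\in K$, unique $x_0\in i\mathfrak{t}^*_+$; $\chi_x(g):=e^{2\langle x_0,\alpha(gh)\rangle}$ (independent of $h$). For positive semidefinite $\rho$, $I_\rho(x)=\sup_{g\in G}\big[-\ln\chi_x(g^{-1})-\ln\mathrm{Tr}\,\pi(g)^*\rho\pi(g)\big]\in(-\infty,\infty]$ (conventions $-\ln0=+\infty$), and $\mathrm{dom}\,I_\rho=\{x: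 I_\rho(x)<\infty\}$; $\mathrm{supp}$ denotes the support (range) subspace. *)

(* Defs.v *)
From HB Require Import structures.
From mathcomp Require Import all_boot all_order all_algebra.
From mathcomp Require Import all_classical all_reals all_analysis.
From mathcomp Require Import complex.
Set Implicit Arguments. Unset Strict Implicit. Unset Printing Implicit Defensive.
Import Order.TTheory GRing.Theory Num.Theory.
Local Open Scope ring_scope.
Local Open Scope classical_set_scope.

(* Operators on H = C^n, C = R[i] (complex numbers over a real type R). *)
Section Defs.
Variable R : realType.
Local Notation C := (R[i]).

Definition adj (n m : nat) (A : 'M[C]_(n, m)) : 'M[C]_(m, n) :=
  (map_mx (@conjc R) A)^T.

Definition psd (n : nat) (A : 'M[C]_n) : Prop :=
  adj A = A /\ forall v : 'cV[C]_n, 0 <= (adj v *m A *m v) 0 0.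

Definition loewner_le (n : nat) (A B : 'M[C]_n) : Prop := psd (B - A).

(* support (range) inclusion: column space of A contained in that of B *)
Definition supp_sub (n : nat) (A B : 'M[C]_n) : Prop := (A^T <= B^T)%MS.

(* -ln t with the convention -ln 0 = +oo (used for t >= 0) *)
Definition negln (t : R) : \bar R :=
  if 0 < t then (- ln t)%:E else +oo%E.

(* I_rho(x) = sup_g [ -ln chi_x(g^{-1}) - ln Tr pi(g)^* rho pi(g) ],
   where chix g stands for chi_x(g^{-1}) *)
Definition Ifun (G : Type) (n : nat) (pi : G -> 'M[C]_n) (chix : G -> R)
    (rho : 'M[C]_n) : \bar R :=
  ereal_sup [set (negln (chix g) + negln (complex.Re (\tr (adj (pi g) *m rho *m pi g))))%E
            | g in [set: G]].
Definition Cof (r : R) : C := Complex r 0.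
End Defs.

(* Main.v *)
Require Import Defs.
From HB Require Import structures.
From mathcomp Require Import all_boot all_order all_algebra.
From mathcomp Require Import all_classical all_reals all_analysis.
From mathcomp Require Import complex.
From mathcomp Require Import ring lra.
Import Order.TTheory GRing.Theory Num.Theory.
Local Open Scope ring_scope.
Set Implicit Arguments. Unset Strict Implicit. Unset Printing Implicit Defensive.

Section Lin.
Variable R : realType.
Local Notation C := (R[i]).
Local Notation ReC := (@complex.Re R).
Local Notation ImC := (@complex.Im R).

Lemma adj_mul m n p (A : 'M[C]_(m, n)) (B : 'M[C]_(n, p)) :
  adj (A *m B) = adj B *m adj A.
Proof. by rewrite /adj map_mxM trmx_mul. Qed.

Lemma adjK m n (A : 'M[C]_(m, n)) : adj (adj A) = A.
Proof. by apply/matrixP => i j; rewrite /adj !mxE conjcK. Qed.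

Lemma adjD m n (A B : 'M[C]_(m, n)) : adj (A + B) = adj A + adj B.
Proof. by apply/matrixP => i j; rewrite /adj !mxE rmorphD. Qed.

Lemma adjB m n (A B : 'M[C]_(m, n)) : adj (A - B) = adj A - adj B.
Proof. by apply/matrixP => i j; rewrite /adj !mxE rmorphB. Qed.

Lemma adjZ m n a (A : 'M[C]_(m, n)) : adj (a *: A) = conjc a *: adj A.
Proof. by apply/matrixP => i j; rewrite /adj !mxE rmorphM. Qed.

Lemma adjE m n (A : 'M[C]_(m, n)) i j : adj A i j = conjc (A j i).
Proof. by rewrite /adj !mxE. Qed.

Definition fm n (A : 'M[C]_n) (u v : 'cV[C]_n) : C := (adj u *m A *m v) 0 0.

Lemma fm_addl n (A : 'M[C]_n) u1 u2 v : fm A (u1 + u2) v = fm A u1 v + fm A u2 v.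
Proof. by rewrite /fm adjD !mulmxDl mxE. Qed.
Lemma fm_addr n (A : 'M[C]_n) u v1 v2 : fm A u (v1 + v2) = fm A u v1 + fm A u v2.
Proof. by rewrite /fm !mulmxDr mxE. Qed.
Lemma fm_scalel n (A : 'M[C]_n) a u v : fm A (a *: u) v = conjc a * fm A u v.
Proof. by rewrite /fm adjZ -!scalemxAl mxE. Qed.
Lemma fm_scaler n (A : 'M[C]_n) a u v : fm A u (a *: v) = a * fm A u v.
Proof. by rewrite /fm -!scalemxAr mxE. Qed.
Lemma fm_herm n (A : 'M[C]_n) u v : adj A = A -> fm A v u = conjc (fm A u v).
Proof.
move=> hA; rewrite /fm -adjE !adj_mul adjK hA mulmxA //.
Qed.
Lemma psd_fm n (A : 'M[C]_n) v : psd A -> 0 <= fm A v v.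
Proof. by case=> _ /(_ v). Qed.

Lemma real_cs (X Y B : R) : 0 <= X -> 0 <= Y -> 0 <= B ->
  (forall t, 0 <= X - 2 * t * B + t ^+ 2 * B * Y) -> B <= X * Y.
Proof.
move=> X0 Y0 B0 H.
have [Yz|Yp] := eqVneq Y 0.
  have [Bz|Bp] := eqVneq B 0; first by rewrite Bz Yz mulr0.
  have := H ((X + 1) / (2 * B)); rewrite Yz.
  have -> : X - 2 * ((X + 1) / (2 * B)) * B + ((X + 1) / (2 * B)) ^+ 2 * B * 0 = -1.
    by field; rewrite Bp.
  by rewrite oppr_ge0 ler10.
have Ypos : 0 < Y by rewrite lt_neqAle eq_sym Yp Y0.
have := H (Y^-1).
have -> : X - 2 * Y^-1 * B + Y^-1 ^+ 2 * B * Y = X - B / Y.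
  by field; rewrite Yp.
by rewrite subr_ge0 ler_pdivrMr // => h.
Qed.

Lemma cs n (A : 'M[C]_n) u v : psd A ->
  ReC (fm A u v) ^+ 2 + ImC (fm A u v) ^+ 2 <= ReC (fm A u u) * ReC (fm A v v).
Proof.
move=> hA; have [hA1 _] := hA.
apply: (@real_cs (ReC (fm A u u)) (ReC (fm A v v)) (ReC (fm A u v) ^+ 2 + ImC (fm A u v) ^+ 2)).
- by have := psd_fm u hA; rewrite lecE => /andP[].
- by have := psd_fm v hA; rewrite lecE => /andP[].
- by rewrite addr_ge0 // sqr_ge0.
move=> t.
pose b := fm A u v.
pose mu : C := Complex (- t * ReC b) (t * ImC b).
have := psd_fm (u + mu *: v) hA.
rewrite fm_addl !fm_addr !fm_scalel !fm_scaler (fm_herm u v hA1) -/b.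
have := psd_fm u hA; have := psd_fm v hA.
rewrite !lecE /=.
case: (fm A u u) => x1 x2; case: (fm A v v) => y1 y2.
rewrite /mu /b; clear mu b; case: (fm A u v) => b1 b2 /=.
move=> /andP[/eqP y20 y10] /andP[/eqP x20 x10] /andP[_].
idtac.
move=> h; apply: le_trans h _.
rewrite y20 le_eqVlt; apply/orP; left; apply/eqP; ring.
Qed.

Lemma fm_lin n (A B : 'M[C]_n) a v : fm (a *: A - B) v v = a * fm A v v - fm B v v.
Proof. by rewrite /fm mulmxBr mulmxBl -scalemxAr -scalemxAl !mxE. Qed.

Lemma adj_delta n (i : 'I_n) : adj (delta_mx i 0 : 'cV[C]_n) = delta_mx 0 i.
Proof. by apply/matrixP => a b; rewrite !mxE rmorph_nat andbC. Qed.

Lemma fm_delta_l n (A : 'M[C]_n) i v : fm A (delta_mx i 0) v = (A *m v) i 0.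
Proof. by rewrite /fm adj_delta -mulmxA -rowE mxE. Qed.

Lemma fm_delta n (A : 'M[C]_n) i : fm A (delta_mx i 0) (delta_mx i 0) = A i i.
Proof. by rewrite fm_delta_l -colE !mxE. Qed.

Lemma real_term (p q p' q' r s N : R) :
  p ^+ 2 + q ^+ 2 <= N -> p' ^+ 2 + q' ^+ 2 <= N ->
  r * (p * p' + q * q') + s * (q * p' - p * q') <= (`|r| + `|s|) * N.
Proof.
move=> h1 h2.
have e1 := sqr_ge0 (p + p'); have e2 := sqr_ge0 (q + q').
have e3 := sqr_ge0 (p - p'); have e4 := sqr_ge0 (q - q').
have e5 := sqr_ge0 (q + p'); have e6 := sqr_ge0 (p + q').
have e7 := sqr_ge0 (q - p'); have e8 := sqr_ge0 (p - q').
have hX : `|p * p' + q * q'| <= N.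
  by rewrite ler_norml; apply/andP; split; nra.
have hZ : `|q * p' - p * q'| <= N.
  by rewrite ler_norml; apply/andP; split; nra.
rewrite mulrDl; apply: lerD.
  by apply: le_trans (ler_norm _) _; rewrite normrM ler_wpM2l.
by apply: le_trans (ler_norm _) _; rewrite normrM ler_wpM2l.
Qed.

Lemma ReC_sum (I : Type) (r : seq I) (P : pred I) (F : I -> C) :
  ReC (\sum_(i <- r | P i) F i) = \sum_(i <- r | P i) ReC (F i).
Proof.
apply: (big_morph ReC) => //.
by move=> [x1 x2] [y1 y2].
Qed.

Lemma fm_bound n (Y : 'M[C]_n) (a : 'cV[C]_n) (N : R) :
  (forall i, ReC (a i 0) ^+ 2 + ImC (a i 0) ^+ 2 <= N) ->
  ReC (fm Y a a) <= (\sum_j \sum_i (`|ReC (Y i j)| + `|ImC (Y i j)|)) * N.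
Proof.
move=> hN.
rewrite /fm mxE ReC_sum mulr_suml; apply: ler_sum => j _.
rewrite mxE big_distrl /= ReC_sum mulr_suml; apply: ler_sum => i _.
rewrite adjE.
have := hN i; have := hN j.
case: (a i 0) => p q; case: (a j 0) => p' q'; case: (Y i j) => r s /=.
move=> h2 h1.
apply: le_trans (real_term r s h1 h2).
by rewrite le_eqVlt; apply/orP; left; apply/eqP; ring.
Qed.

Lemma loewner_exists n (rho sigma : 'M[C]_n) : psd rho -> psd sigma ->
  supp_sub rho sigma -> exists p : R, 0 < p /\ loewner_le rho (Cof p *: sigma).
Proof.
move=> hr hs hsub; have [hr1 _] := hr; have [hs1 _] := hs.
pose P := (pinvmx sigma^T)^T.
have hP : sigma *m P *m rho = rho.
  apply: trmx_inj; rewrite trmx_mul trmx_mul /P trmxK mulmxA.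
  exact: mulmxKpV hsub.

have hP2 : rho *m adj P *m sigma = rho.
  by have := congr1 (fun M => adj M) hP; rewrite !adj_mul hr1 hs1 mulmxA.
pose Y := P *m rho *m adj P.
have hY : rho = sigma *m Y *m sigma.
  by rewrite -{1}hP -{1}hP2 /Y !mulmxA.
pose T := \sum_i ReC (sigma i i).
pose K := \sum_j \sum_i (`|ReC (Y i j)| + `|ImC (Y i j)|).
have Tii : forall i, 0 <= ReC (sigma i i).
  move=> i; have := psd_fm (delta_mx i 0) hs; rewrite fm_delta lecE.
  by case/andP.
have T0 : 0 <= T by apply: sumr_ge0 => i _.
have K0 : 0 <= K.
  by apply: sumr_ge0 => j _; apply: sumr_ge0 => i _; rewrite addr_ge0.
exists (K * T + 1).
split; first by have := mulr_ge0 K0 T0; lra.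
split.
  by rewrite adjB adjZ hs1 hr1 /Cof /conjc oppr0.
move=> v; rewrite -/(fm _ v v) fm_lin.
have Qs0 : 0 <= ReC (fm sigma v v).
  by have := psd_fm v hs; rewrite lecE => /andP[].
have b1 : ReC (fm rho v v) = ReC (fm Y (sigma *m v) (sigma *m v)).
  by rewrite {1}hY /fm adj_mul hs1 !mulmxA.
have b3 : forall i, ReC ((sigma *m v) i 0) ^+ 2 + ImC ((sigma *m v) i 0) ^+ 2
    <= T * ReC (fm sigma v v).
  move=> i; rewrite -fm_delta_l.
  apply: le_trans (cs (delta_mx i 0) v hs) _.
  rewrite fm_delta ler_wpM2r //.
  by rewrite /T (bigD1 i) //= lerDl sumr_ge0.
have hb := fm_bound Y b3; rewrite -b1 in hb.
have hx := psd_fm v hs; have hy := psd_fm v hr.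
move: hb hx hy Qs0; rewrite /Cof.
case: (fm sigma v v) => x1 x2; case: (fm rho v v) => y1 y2.
rewrite !lecE /= => hb /andP[/eqP hx2 _] /andP[/eqP hy2 _] Qs0.
apply/andP; split; first by apply/eqP; rewrite hx2 hy2; ring.
move: hb; rewrite -/K => hb; nra.
Qed.

Lemma fm_mul n (A : 'M[C]_n) (M : 'M[C]_n) u w :
  fm A (M *m u) (M *m w) = fm (adj M *m A *m M) u w.
Proof. by rewrite /fm adj_mul !mulmxA. Qed.

Lemma tr_ge0 n (A M : 'M[C]_n) : psd A -> 0 <= \tr (adj M *m A *m M).
Proof.
move=> hA; rewrite /mxtrace; apply: sumr_ge0 => i _.
by rewrite -fm_delta -fm_mul; exact: psd_fm.
Qed.

Lemma tr_lin n (A B M : 'M[C]_n) a :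
  \tr (adj M *m (a *: A - B) *m M) = a * \tr (adj M *m A *m M) - \tr (adj M *m B *m M).
Proof. by rewrite mulmxBr mulmxBl -scalemxAr -scalemxAl linearB /= mxtraceZ. Qed.

Lemma negln_le (p a b : R) : 0 < p -> 0 <= a -> a <= p * b ->
  (negln b + (- ln p)%:E <= negln a)%E.
Proof.
move=> hp ha hab; rewrite /negln.
have [apos|anp] := ltP 0 a; last by rewrite leey.
have bpos : 0 < b.
  by rewrite -(pmulr_rgt0 _ hp); apply: lt_le_trans hab.
rewrite bpos -EFinD lee_fin.
have : ln a <= ln (b * p).
  by rewrite ler_ln ?posrE ?mulr_gt0 // mulrC.
rewrite lnM ?posrE //; lra.
Qed.

Lemma negln_ninf (r : R) : negln r != -oo%E.
Proof. by rewrite /negln; case: ifP. Qed.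

Lemma part1 n (G : Type) (g0 : G) (pi : G -> 'M[C]_n) (chix : G -> R)
    (rho sigma : 'M[C]_n) (p : R) :
  psd rho -> 0 <= p -> loewner_le rho (Cof p *: sigma) ->
  (Ifun pi chix sigma + negln p <= Ifun pi chix rho)%E.
Proof.
move=> hr hp hl.
pose t A g := ReC (\tr (adj (pi g) *m A *m pi g)).
have t0 : forall g, 0 <= t rho g.
  by move=> g; have := tr_ge0 (pi g) hr; rewrite lecE => /andP[].
have tle : forall g, t rho g <= p * t sigma g.
  move=> g; have := tr_ge0 (pi g) hl; rewrite tr_lin /t /Cof.
  case: (\tr (adj (pi g) *m sigma *m pi g)) => a1 a2.
  case: (\tr (adj (pi g) *m rho *m pi g)) => b1 b2.
  rewrite lecE /= => /andP[_ h]; lra.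
have [p0|pp] := eqVneq p 0.
  have Hoo : Ifun pi chix rho = +oo%E.
    apply/eqP; rewrite -leye_eq.
    have -> : (+oo = negln (chix g0) + negln (t rho g0))%E.
      have -> : t rho g0 = 0.
        by apply/le_anti; rewrite t0 andbT; have := tle g0; rewrite p0 mul0r.
      by rewrite {2}/negln ltxx addey // negln_ninf.
    by apply: ereal_sup_ubound; exists g0.
  by rewrite Hoo leey.
have ppos : 0 < p by rewrite lt_neqAle eq_sym pp hp.
have -> : negln p = (- ln p)%:E by rewrite /negln ppos.
rewrite -leeBrDr //; apply: ub_ereal_sup => _ [g _ <-].
rewrite leeBrDr //; apply: le_trans (ereal_sup_ubound _); last by exists g.
rewrite -addeA; apply: leeD => //; exact: negln_le (t0 g) (tle g).
Qed.
End Lin.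

Theorem mainTheorem9 (R : realType) (n : nat) (G : Type) (g0 : G)
    (pi : G -> 'M[R[i]]_n) (X : Type) (chi : X -> G -> R)
    (rho sigma : 'M[R[i]]_n) :
  psd rho -> psd sigma ->
  (forall p : R, 0 <= p -> loewner_le rho (Cof p *: sigma) ->
     forall x : X,
       (Ifun pi (chi x) sigma + negln p <= Ifun pi (chi x) rho)%E) /\
  (supp_sub rho sigma ->
     forall x : X, (Ifun pi (chi x) rho < +oo)%E -> (Ifun pi (chi x) sigma < +oo)%E).
Proof.
move=> hr hs; split.
  by move=> p hp hl x; exact: (@part1 R n G g0 pi (chi x) rho sigma p hr hp hl).
move=> hsub x hfin.
have [p [pp hl]] := loewner_exists hr hs hsub.
have := (@part1 R n G g0 pi (chi x) rho sigma p hr (ltW pp) hl).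
rewrite /negln pp => h; rewrite ltey; apply/negP => /eqP E.
move: h; rewrite E addye // leye_eq => /eqP E2.
by rewrite E2 ltxx in hfin.
Qed.
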